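(* Let $T$ be a first-order $\mathscr L$-theory and $A$ a model of $T_\forall$. Then $A$ is existentially closed in $\mathcal U_{\mathcal K}=\mathrm{Mod}(T_\forall)$ if and only if $A^*$ is geometrically closed in $\mathcal U_{\mathcal K}^*=\mathrm{Mod}(T_\forall\cup\emptyset^* )$.
   Context: $T_\forall$: consequences of $T$ of the form $\forall\bar y(\bigwedge\Phi\to\bigvee\Psi)$, $\Phi,\Psi$ finite sets of atomic formulas. $A$ is existentially closed in a class $\mathcal C$ if every embedding of $A$ into a member of $\mathcal C$ reflects existential sentences with parameters from $A$. $\mathscr L^*$ is $\mathscr L$ plus, for each relation symbol $R$ of $\mathscr L$, a new relation symbol $R^*$ of the same arity; $\emptyset^*$ is the set of axioms $\forall\bar x(\neg R(\bar x)\leftrightarrow R^*(\bar x))$; $T^*=T\cup\emptyset^*$ (and $T_\forall\cup\emptyset^*$ is equivalent to $(T^* )_\forall$). $A^*$ is the expansion of $A$ interpreting each $R^*$ as the complement of $R$. A homomorphism $f:C\to D$ is geometrically closed if every sentence $\forall\bar y\,(\bigwedge\Phi(\bar c,\bar y)\to\psi(\bar c,\bar y))$ ($\Phi\cup\{\psi\}$ finite sets of atomic formulas, parameters from $C$) true in $C$ holds in $D$ of $f\bar c$; $C$ is geometrically closed in a class if every homomorphism from $C$ to a member of that class is. *)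

(* Defs.v *)
From mathcomp Require Import all_boot.
Set Implicit Arguments. Unset Strict Implicit. Unset Printing Implicit Defensive.

Record signature := Signature {
  funsym : Type; fun_ar : funsym -> nat;
  relsym : Type; rel_ar : relsym -> nat }.

Section Syntax.
Variable L : signature.

Inductive term : Type :=
| tvar : nat -> term
| tapp (f : funsym L) : ('I_(fun_ar f) -> term) -> term.

Inductive atom : Type :=
| AEq : term -> term -> atom
| ARel (r : relsym L) : ('I_(rel_ar r) -> term) -> atom.

Inductive formula : Type :=
| FAtom : atom -> formula
| FFal : formula
| FImp : formula -> formula -> formula
| FAnd : formula -> formula -> formula
| FOr : formula -> formula -> formula
| FAll : nat -> formula -> formula
| FEx : nat -> formula -> formula.

Definition FTrue := FImp FFal FFal.
Definition FNot (p : formula) := FImp p FFal.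
Definition FIff (p q : formula) := FAnd (FImp p q) (FImp q p).
Definition bigAnd (s : seq formula) := foldr FAnd FTrue s.
Definition bigOr (s : seq formula) := foldr FOr FFal s.
Definition closeAll (ys : seq nat) (p : formula) := foldr FAll p ys.
Definition closeEx (ys : seq nat) (p : formula) := foldr FEx p ys.

Fixpoint occurs (x : nat) (t : term) : Prop :=
  match t with
  | tvar n => x = n
  | tapp f a => exists i, occurs x (a i)
  end.

Definition occurs_atom (x : nat) (a : atom) : Prop :=
  match a with
  | AEq t1 t2 => occurs x t1 \/ occurs x t2
  | ARel r a => exists i, occurs x (a i)
  end.

Fixpoint free (x : nat) (p : formula) : Prop :=
  match p with
  | FAtom a => occurs_atom x a
  | FFal => False
  | FImp p q | FAnd p q | FOr p q => free x p \/ free x q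
  | FAll y p | FEx y p => x <> y /\ free x p
  end.

Definition closed (p : formula) := forall x, ~ free x p.

Fixpoint qf (p : formula) : Prop :=
  match p with
  | FAtom _ | FFal => True
  | FImp p q | FAnd p q | FOr p q => qf p /\ qf q
  | FAll _ _ | FEx _ _ => False
  end.

Definition existential (p : formula) :=
  exists ys psi, qf psi /\ p = closeEx ys psi.

Record structure := Structure {
  dom : Type;
  dom_inh : inhabited dom;
  interp_fun : forall f : funsym L, ('I_(fun_ar f) -> dom) -> dom;
  interp_rel : forall r : relsym L, ('I_(rel_ar r) -> dom) -> Prop }.

Fixpoint eval (M : structure) (rho : nat -> dom M) (t : term) : dom M :=
  match t with
  | tvar n => rho n
  | tapp f a => @interp_fun M f (fun i => eval rho (a i))
  end.

Definition update (M : structure) (rho : nat -> dom M) (x : nat) (d : dom M) :=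
  fun n => if n == x then d else rho n.

Definition sat_atom (M : structure) (rho : nat -> dom M) (a : atom) : Prop :=
  match a with
  | AEq t1 t2 => eval rho t1 = eval rho t2
  | ARel r args => @interp_rel M r (fun i => eval rho (args i))
  end.

Fixpoint sat (M : structure) (rho : nat -> dom M) (p : formula) : Prop :=
  match p with
  | FAtom a => sat_atom rho a
  | FFal => False
  | FImp p q => sat rho p -> sat rho q
  | FAnd p q => sat rho p /\ sat rho q
  | FOr p q => sat rho p \/ sat rho q
  | FAll x p => forall d, sat (update rho x d) p
  | FEx x p => exists d, sat (update rho x d) p
  end.

(* M |= p (universal closure; for sentences the usual truth) *)
Definition holds (M : structure) (p : formula) := forall rho : nat -> dom M, sat rho p.
Definition models (M : structure) (Th : formula -> Prop) :=
  forall p, Th p -> holds M p.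
Definition entails (Th : formula -> Prop) (p : formula) :=
  forall M : structure, models M Th -> holds M p.

Definition theory (T : formula -> Prop) := forall p, T p -> closed p.

Definition Tforall (T : formula -> Prop) (p : formula) :=
  closed p /\ entails T p /\
  exists (ys : seq nat) (Phi Psi : seq atom),
    p = closeAll ys (FImp (bigAnd (map FAtom Phi)) (bigOr (map FAtom Psi))).

Definition embedding (A B : structure) (f : dom A -> dom B) :=
  injective f /\
  (forall (g : funsym L) a, f (@interp_fun A g a) = @interp_fun B g (f \o a)) /\
  (forall (r : relsym L) a, @interp_rel A r a <-> @interp_rel B r (f \o a)).

Definition homomorphism (A B : structure) (f : dom A -> dom B) :=
  (forall (g : funsym L) a, f (@interp_fun A g a) = @interp_fun B g (f \o a)) /\
  (forall (r : relsym L) a, @interp_rel A r a -> @interp_rel B r (f \o a)).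

(* A is existentially closed in the class K: every embedding of A into a
   member of K reflects existential sentences with parameters from A
   (parameters = values of the free variables, given by rho). *)
Definition ex_closed_in (K : structure -> Prop) (A : structure) :=
  forall B, K B -> forall f : dom A -> dom B, embedding f ->
  forall (p : formula) (rho : nat -> dom A),
    existential p -> sat (f \o rho) p -> sat rho p.

Definition geom (ys : seq nat) (Phi : seq atom) (psi : atom) :=
  closeAll ys (FImp (bigAnd (map FAtom Phi)) (FAtom psi)).

Definition geom_closed_hom (C D : structure) (f : dom C -> dom D) :=
  forall ys Phi psi (rho : nat -> dom C),
    sat rho (geom ys Phi psi) -> sat (f \o rho) (geom ys Phi psi).

Definition geom_closed_in (K : structure -> Prop) (C : structure) :=
  forall D, K D -> forall f : dom C -> dom D, homomorphism f ->
    geom_closed_hom f.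

End Syntax.

Arguments tvar {L}.

(* Relation symbols of L^*: those of L, a starred copy R^* of each, and the
   starred copy =^* of equality (equality treated as a relation symbol). *)
Inductive star_rel (R : Type) : Type :=
| SOrig : R -> star_rel R
| SStar : R -> star_rel R
| SEqStar : star_rel R.
Arguments SEqStar {R}.

Definition star_ar (L : signature) (r : star_rel (relsym L)) : nat :=
  match r with
  | SOrig r => rel_ar r
  | SStar r => rel_ar r
  | SEqStar => 2
  end.

Definition star_sig (L : signature) : signature :=
  @Signature (funsym L) (@fun_ar L) (star_rel (relsym L)) (@star_ar L).

Section Star.
Variable L : signature.

Fixpoint tr_term (t : term L) : term (star_sig L) :=
  match t with
  | tvar n => tvar n
  | tapp f a => @tapp (star_sig L) f (fun i => tr_term (a i))
  end.

Definition tr_atom (a : atom L) : atom (star_sig L) :=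
  match a with
  | AEq t1 t2 => AEq (tr_term t1) (tr_term t2)
  | ARel r args => @ARel (star_sig L) (SOrig r) (fun i => tr_term (args i))
  end.

Fixpoint tr_form (p : formula L) : formula (star_sig L) :=
  match p with
  | FAtom a => FAtom (tr_atom a)
  | FFal => FFal _
  | FImp p q => FImp (tr_form p) (tr_form q)
  | FAnd p q => FAnd (tr_form p) (tr_form q)
  | FOr p q => FOr (tr_form p) (tr_form q)
  | FAll x p => FAll x (tr_form p)
  | FEx x p => FEx x (tr_form p)
  end.

Definition var_args (n : nat) : 'I_n -> term (star_sig L) :=
  fun i => tvar (nat_of_ord i).

(* The axioms emptyset^* : forall xs (~ R(xs) <-> R^*(xs)), including R = (=). *)
Definition emptystar (p : formula (star_sig L)) : Prop :=
  (exists r : relsym L,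
     p = closeAll (iota 0 (rel_ar r))
           (FIff (FNot (FAtom (@ARel (star_sig L) (SOrig r) (@var_args (rel_ar r)))))
                 (FAtom (@ARel (star_sig L) (SStar r) (@var_args (rel_ar r))))))
  \/ p = closeAll [:: 0; 1]
           (FIff (FNot (FAtom (AEq (tvar 0) (tvar 1))))
                 (FAtom (@ARel (star_sig L) SEqStar (@var_args 2)))).

Definition Tforall_star (T : formula L -> Prop) (p : formula (star_sig L)) :=
  (exists q, Tforall T q /\ p = tr_form q) \/ emptystar p.

Definition star_struct (A : structure L) : structure (star_sig L) :=
  @Structure (star_sig L) (dom A) (dom_inh A) (@interp_fun L A)
    (fun r => match r return ('I_(star_ar r) -> dom A) -> Prop with
              | SOrig r => @interp_rel L A r
              | SStar r => fun a => ~ @interp_rel L A r a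
              | SEqStar => fun a => a ord0 <> a (@ord_max 1)
              end).

Definition UK (T : formula L -> Prop) (B : structure L) := models B (Tforall T).
Definition UKstar (T : formula L -> Prop) (D : structure (star_sig L)) :=
  models D (Tforall_star T).

End Star.

(* Main.v *)
Require Import Defs.
From mathcomp Require Import all_boot.
From Stdlib Require Import Classical FunctionalExtensionality.
From Stdlib Require List.
From Stdlib Require Import Setoid Morphisms.
Set Implicit Arguments. Unset Strict Implicit. Unset Printing Implicit Defensive.

Definition agree (T : Type) (xs : seq nat) (r1 r2 : nat -> T) :=
  forall n, n \notin xs -> r2 n = r1 n.

Lemma sat_closeAll (L : signature) (M : structure L) xs p (rho : nat -> dom M) :
  sat rho (closeAll xs p) <-> forall rho', agree xs rho rho' -> sat rho' p.
Proof.
elim: xs rho => [|x xs IH] rho /=.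
  split => [H rho' Ha|H]; last by apply: H => n.
  have -> : rho' = rho by apply: functional_extensionality => n; exact: Ha.
  exact: H.
split => [H rho' Ha|H d].
  have := (proj1 (IH (update rho x (rho' x))) (H (rho' x))); apply=> n Hn.
  rewrite /update; case: eqP => [->//|/eqP Hnx].
  by apply: Ha; rewrite in_cons negb_or Hnx.
apply/IH => rho' Ha; apply: H => n; rewrite in_cons negb_or => /andP[Hnx Hn].
by rewrite Ha // /update (negbTE Hnx).
Qed.

Lemma sat_closeEx (L : signature) (M : structure L) xs p (rho : nat -> dom M) :
  sat rho (closeEx xs p) <-> exists rho', agree xs rho rho' /\ sat rho' p.
Proof.
elim: xs rho => [|x xs IH] rho /=.
  split => [H|[rho' [Ha H]]]; first by exists rho; split => // n.
  have <- : rho' = rho by apply: functional_extensionality => n; exact: Ha.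
  exact: H.
split => [[d /IH [rho' [Ha H]]]|[rho' [Ha H]]].
  exists rho'; split => // n; rewrite in_cons negb_or => /andP[Hnx Hn].
  by rewrite Ha // /update (negbTE Hnx).
exists (rho' x); apply/IH; exists rho'; split => // n Hn.
rewrite /update; case: eqP => [->//|/eqP Hnx].
by apply: Ha; rewrite in_cons negb_or Hnx.
Qed.

Lemma sat_bigAnd (L : signature) (M : structure L) (rho : nat -> dom M) Phi :
  sat rho (bigAnd (map (@FAtom L) Phi)) <-> List.Forall (sat_atom rho) Phi.
Proof.
elim: Phi => [|a Phi IH] /=; first by split => // _; constructor.
split => [[H1 H2]|H]; first by constructor => //; apply/IH.
by inversion H; split => //; apply/IH.
Qed.

Section StarPart.
Variable L : signature.
Local Notation Ls := (star_sig L).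

Definition Rs (D : structure Ls) : structure L :=
  @Structure L (dom D) (dom_inh D) (@interp_fun Ls D)
    (fun r => @interp_rel Ls D (SOrig r)).

Lemma eval_tr (D : structure Ls) (rho : nat -> dom D) (t : term L) :
  eval (M := D) rho (tr_term t) = eval (M := Rs D) rho t.
Proof.
elim: t => [n|f a IH] //=; f_equal.
by apply: functional_extensionality => i; exact: IH.
Qed.

Lemma sat_tr (D : structure Ls) (rho : nat -> dom D) (p : formula L) :
  sat (M := D) rho (tr_form p) <-> sat (M := Rs D) rho p.
Proof.
elim: p rho => [a|//|p IHp q IHq|p IHp q IHq|p IHp q IHq|x p IH|x p IH] rho /=.
- case: a => [t1 t2|r args] /=; first by rewrite !eval_tr.
  have -> : (fun i => eval (M := D) rho (tr_term (args i))) =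
            (fun i => eval (M := Rs D) rho (args i)).
    by apply: functional_extensionality => i; exact: eval_tr.
  by [].
- by rewrite IHp IHq.
- by rewrite IHp IHq.
- by rewrite IHp IHq.
- by split => H d; apply/IH; exact: H.
- by split => [[d H]|[d H]]; exists d; apply/IH; exact: H.
Qed.

Lemma eval_RS (A : structure L) (rho : nat -> dom A) (t : term L) :
  eval (M := Rs (star_struct A)) rho t = eval (M := A) rho t.
Proof.
elim: t => [n|f a IH] //=; f_equal.
by apply: functional_extensionality => i; exact: IH.
Qed.

Lemma sat_RS (A : structure L) (rho : nat -> dom A) (p : formula L) :
  sat (M := Rs (star_struct A)) rho p <-> sat (M := A) rho p.
Proof.
elim: p rho => [a|//|p IHp q IHq|p IHp q IHq|p IHp q IHq|x p IH|x p IH] rho /=.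
- case: a => [t1 t2|r args] /=; first by rewrite !eval_RS.
  have -> : (fun i => eval (M := Rs (star_struct A)) rho (args i)) =
            (fun i => eval (M := A) rho (args i)).
    by apply: functional_extensionality => i; exact: eval_RS.
  by [].
- by rewrite IHp IHq.
- by rewrite IHp IHq.
- by rewrite IHp IHq.
- by split => H d; apply/IH; exact: H.
- by split => [[d H]|[d H]]; exists d; apply/IH; exact: H.
Qed.

Definition good (D : structure Ls) :=
  (forall (r : relsym L) (a : 'I_(rel_ar r) -> dom D),
     @interp_rel Ls D (SStar r) a <-> ~ @interp_rel Ls D (SOrig r) a) /\
  (forall a : 'I_2 -> dom D, @interp_rel Ls D SEqStar a <-> a ord0 <> a (@ord_max 1)).

Lemma good_star (A : structure L) : good (star_struct A).
Proof. by split. Qed.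

Fixpoint untr (t : term Ls) : term L :=
  match t with
  | tvar n => tvar n
  | @tapp _ f a => @tapp L f (fun i => untr (a i))
  end.

Lemma eval_untr (D : structure Ls) (rho : nat -> dom D) (t : term Ls) :
  eval (M := Rs D) rho (untr t) = eval (M := D) rho t.
Proof.
elim: t => [n|f a IH] //=; f_equal.
by apply: functional_extensionality => i; exact: IH.
Qed.

Definition back (a : atom Ls) : formula L :=
  match a with
  | AEq t1 t2 => FAtom (AEq (untr t1) (untr t2))
  | @ARel _ r args =>
    match r as r0 return ('I_(star_ar r0) -> term Ls) -> formula L with
    | SOrig r => fun args => FAtom (@ARel L r (fun i => untr (args i)))
    | SStar r => fun args => FNot (FAtom (@ARel L r (fun i => untr (args i))))
    | SEqStar => fun args => FNot (FAtom (AEq (untr (args ord0)) (untr (args (@ord_max 1)))))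
    end args
  end.

Lemma qf_back a : qf (back a).
Proof. by case: a => [t1 t2|[r|r|] args]. Qed.

Lemma sat_back (D : structure Ls) (rho : nat -> dom D) (a : atom Ls) :
  good D -> (sat (M := Rs D) rho (back a) <-> sat_atom (M := D) rho a).
Proof.
move=> [G1 G2]; case: a => [t1 t2|[r|r|] args] /=; first by rewrite !eval_untr.
- have -> : (fun i => eval (M := Rs D) rho (untr (args i))) =
            (fun i => eval (M := D) rho (args i)).
    by apply: functional_extensionality => i; exact: eval_untr.
  by [].
- have -> : (fun i => eval (M := Rs D) rho (untr (args i))) =
            (fun i => eval (M := D) rho (args i)).
    by apply: functional_extensionality => i; exact: eval_untr.
  by rewrite G1.
- by rewrite G2 !eval_untr.
Qed.

Definition neg_atom (a : atom L) : atom Ls :=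
  match a with
  | AEq t1 t2 => @ARel Ls SEqStar (fun i : 'I_2 => if nat_of_ord i == 0 then tr_term t1 else tr_term t2)
  | ARel r args => @ARel Ls (SStar r) (fun i => tr_term (args i))
  end.

Lemma sat_tr_atom (D : structure Ls) (rho : nat -> dom D) (a : atom L) :
  sat_atom (M := D) rho (tr_atom a) <-> sat_atom (M := Rs D) rho a.
Proof. exact: (sat_tr rho (FAtom a)). Qed.

Lemma sat_neg_atom (D : structure Ls) (rho : nat -> dom D) (a : atom L) :
  good D -> (sat_atom (M := D) rho (neg_atom a) <-> ~ sat_atom (M := Rs D) rho a).
Proof.
move=> [G1 G2]; case: a => [t1 t2|r args] /=; first by rewrite G2 /= !eval_tr.
rewrite G1.
have -> : (fun i => eval (M := D) rho (tr_term (args i))) =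
          (fun i => eval (M := Rs D) rho (args i)).
  by apply: functional_extensionality => i; exact: eval_tr.
by [].
Qed.

Definition prodl (s t : list (list (atom Ls))) :=
  List.flat_map (fun x => List.map (fun y => List.app x y) t) s.

Fixpoint dnf (p : formula L) : list (list (atom Ls)) * list (list (atom Ls)) :=
  match p with
  | FAtom a => ([:: [:: tr_atom a]], [:: [:: neg_atom a]])
  | FFal => ([::], [:: [::]])
  | FImp p q => (List.app (dnf p).2 (dnf q).1, prodl (dnf p).1 (dnf q).2)
  | FAnd p q => (prodl (dnf p).1 (dnf q).1, List.app (dnf p).2 (dnf q).2)
  | FOr p q => (List.app (dnf p).1 (dnf q).1, prodl (dnf p).2 (dnf q).2)
  | _ => ([::], [::])
  end.

Lemma Ex_prodl (P : atom Ls -> Prop) s t :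
  List.Exists (List.Forall P) (prodl s t) <->
  List.Exists (List.Forall P) s /\ List.Exists (List.Forall P) t.
Proof.
rewrite /prodl !List.Exists_exists; split.
  move=> [z [/List.in_flat_map [x [Hx /List.in_map_iff [y [<- Hy]]]] /List.Forall_app [H1 H2]]].
  by split; [exists x | exists y].
move=> [[x [Hx H1]] [y [Hy H2]]]; exists (List.app x y); split.
  by apply/List.in_flat_map; exists x; split => //; apply/List.in_map_iff; exists y.
by apply/List.Forall_app.
Qed.

Lemma Ex_single (P : atom Ls -> Prop) a :
  List.Exists (List.Forall P) [:: [:: a]] <-> P a.
Proof.
split => [H|H]; last by constructor; constructor.
by inversion H as [? ? H1|? ? H1]; [inversion H1 | inversion H1].
Qed.

Lemma dnf_correct (D : structure Ls) (rho : nat -> dom D) (p : formula L) :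
  good D -> qf p ->
  (sat (M := Rs D) rho p <-> List.Exists (List.Forall (sat_atom rho)) (dnf p).1) /\
  (~ sat (M := Rs D) rho p <-> List.Exists (List.Forall (sat_atom rho)) (dnf p).2).
Proof.
move=> G; elim: p => [a|_|p IHp q IHq|p IHp q IHq|p IHp q IHq|//|//] /=.
- by rewrite !Ex_single sat_tr_atom sat_neg_atom.
- split.
    split; first by case.
    by move=> /List.Exists_nil.
  by split; [move=> _; constructor; constructor | move=> _ []].
- move=> [/IHp [H1 H2] /IHq [H3 H4]].
  rewrite List.Exists_app Ex_prodl -H1 -H2 -H3 -H4.
  case: (classic (sat (M := Rs D) rho p)); case: (classic (sat (M := Rs D) rho q)); tauto.
- move=> [/IHp [H1 H2] /IHq [H3 H4]].
  rewrite List.Exists_app Ex_prodl -H1 -H2 -H3 -H4.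
  case: (classic (sat (M := Rs D) rho p)); case: (classic (sat (M := Rs D) rho q)); tauto.
- move=> [/IHp [H1 H2] /IHq [H3 H4]].
  rewrite List.Exists_app Ex_prodl -H1 -H2 -H3 -H4.
  case: (classic (sat (M := Rs D) rho p)); case: (classic (sat (M := Rs D) rho q)); tauto.
Qed.

End StarPart.

Section Main.
Variable L : signature.
Local Notation Ls := (star_sig L).

Lemma good_of_UKstar (T : formula L -> Prop) (D : structure Ls) :
  UKstar T D -> good D.
Proof.
move=> HD; case: (dom_inh D) => d0; split.
- move=> r a.
  have H := HD _ (or_intror (or_introl (ex_intro _ r erefl))).
  pose rho := fun k => match @insub _ (fun k => k < rel_ar r) _ k with
                       | Some i => a i | None => d0 end.
  have := proj1 (sat_closeAll _ _ _) (H rho) rho (fun n _ => erefl).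
  have E : (fun i : 'I_(rel_ar r) => rho (nat_of_ord i)) = a.
    by apply: functional_extensionality => i; rewrite /rho valK.
  rewrite /= /var_args /= E.
  move=> [H1 H2]; split => [H3 H4|H3]; first exact: H2 H3 H4.
  by apply: H1.
- move=> a.
  have H := HD _ (or_intror (or_intror erefl)).
  pose rho := fun k : nat => if k == 0 then a ord0 else a (@ord_max 1).
  have := proj1 (sat_closeAll _ _ _) (H rho) rho (fun n _ => erefl).
  have E : (fun i : 'I_2 => rho (nat_of_ord i)) = a.
    apply: functional_extensionality => -[[|[|m]] Hm] //=; rewrite /rho /=.
    + by congr a; apply: val_inj.
    + by congr a; apply: val_inj.
  rewrite /= /var_args /= E.
  move=> [H1 H2]; split => [H3 H4|H3]; first exact: H2 H3 H4.
  by apply: H1.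
Qed.

Lemma models_tr (T : formula L -> Prop) (D : structure Ls) :
  UKstar T D -> models (Rs D) (Tforall T).
Proof. by move=> HD q Hq rho; apply/sat_tr; apply: HD; left; exists q. Qed.

Lemma UKstar_star (T : formula L -> Prop) (B : structure L) :
  models B (Tforall T) -> UKstar T (star_struct B).
Proof.
move=> HB p [[q [Hq ->]]|[[r ->]|->]] rho.
- by apply/sat_tr; apply/sat_RS; exact: HB q Hq rho.
- by apply/sat_closeAll => rho' _ /=; split => H.
- by apply/sat_closeAll => rho' _ /=; split => H.
Qed.

Lemma sat_bigAnd_back (D : structure Ls) (rho : nat -> dom D) Phi :
  good D -> (sat (M := Rs D) rho (bigAnd (map (@back L) Phi)) <-> List.Forall (sat_atom rho) Phi).
Proof.
move=> G; elim: Phi => [|a Phi IH] /=; first by split => // _; constructor.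
split => [[H1 H2]|H]; first by constructor; [apply/sat_back | apply/IH].
by inversion H; split; [apply/sat_back | apply/IH].
Qed.

Lemma qf_bigAnd_back Phi : qf (bigAnd (map (@back L) Phi)).
Proof. by elim: Phi => [|a Phi IH] //=; split => //; apply: qf_back. Qed.

End Main.

Theorem theorem4p21 (L : signature) (T : formula L -> Prop) (A : structure L) :
  theory T -> models A (Tforall T) ->
  (ex_closed_in (UK T) A <-> geom_closed_in (UKstar T) (star_struct A)).
Proof.
move=> HT HA; split.
- move=> Hec D HD f [Hf1 Hf2] ys Phi psi rho Hg.
  have G := good_of_UKstar HD.
  have GA := good_star A.
  have Emb : embedding (A := A) (B := Rs D) f.
    split; [|split].
    + move=> x y Exy; apply: NNPP => Hxy.
      have := Hf2 SEqStar (fun i : 'I_2 => if nat_of_ord i == 0 then x else y) Hxy.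
      by move/(proj1 (G.2 _)); rewrite /= Exy.
    + move=> g a; exact: Hf1.
    + move=> r a; split; first exact: Hf2 (SOrig r) a.
      move=> H; apply: NNPP => Hn.
      by have := Hf2 (SStar r) a Hn; move/(proj1 (G.1 _ _)); apply.
  apply/sat_closeAll => rho' Ha /= /sat_bigAnd HPhi; apply: NNPP => Hpsi.
  pose p := closeEx ys (FAnd (bigAnd (map (@back L) Phi)) (FNot (@back L psi))).
  have Hex : existential p.
    by exists ys, (FAnd (bigAnd (map (@back L) Phi)) (FNot (@back L psi)));
       split => //; split; [apply: qf_bigAnd_back | split => //; apply: qf_back].
  have Hs : sat (M := Rs D) (f \o rho) p.
    apply/sat_closeEx; exists rho'; split => //; split; first by apply/sat_bigAnd_back.
    by move/(sat_back _ _ G).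
  have := Hec (Rs D) (models_tr HD) f Emb p rho Hex Hs.
  move/sat_closeEx => [rho'' [Ha'' /sat_RS [/sat_bigAnd_back H1 H2]]].
  move: (H1 GA) => {}H1.
  move/sat_closeAll: Hg => /(_ rho'' Ha'') /= H.
  apply: H2; apply/(sat_back _ _ GA); apply: H; exact/sat_bigAnd.
- move=> Hgc B HB f [Hinj [Hf1 Hf2]] p rho [ys [psi [Hqf ->]]] Hs.
  apply: NNPP => Hn.
  move/sat_closeEx: Hs => [rho' [Ha Hpsi]].
  have := proj1 (proj1 (@dnf_correct L (star_struct B) rho' psi (good_star B) Hqf)) (proj2 (sat_RS _ _) Hpsi).
  move/List.Exists_exists => [Phi [HinPhi HPhi]].
  have Hhom : homomorphism (A := star_struct A) (B := star_struct B) f.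
    split; first by move=> g a; exact: Hf1.
    case=> [r|r|] a /=.
    + exact: (proj1 (Hf2 r a)).
    + by move=> H1 H2; apply: H1; exact: (proj2 (Hf2 r a)).
    + by move=> H1 H2; apply: H1; exact: Hinj.
  pose fa := @ARel (star_sig L) SEqStar (fun _ => tvar 0).
  have Hg : sat (M := star_struct A) rho (geom ys Phi fa).
    apply/sat_closeAll => rho'' Ha'' /sat_bigAnd HPhi''.
    exfalso; apply: Hn; apply/sat_closeEx; exists rho''; split => //.
    apply/sat_RS; apply/(proj1 (@dnf_correct L (star_struct A) rho'' psi (good_star A) Hqf)).
    by apply/List.Exists_exists; exists Phi.
  have := Hgc (star_struct B) (UKstar_star HB) f Hhom ys Phi fa rho Hg.
  move/sat_closeAll => /(_ rho' Ha) /= H.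
  by apply: H => //; apply/sat_bigAnd.
Qed.
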